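(* For every family of pointed spaces $\{(X_i,x_i)\}_{i\in I}$, $$\mathcal{H}_\infty\Big(\prod_{i\in I}X_i,x_\ast\Big)\cong\prod_{i\in I}\mathcal{H}_\infty(X_i,x_i),$$ where $x_\ast=(x_i)_{i\in I}\in\prod_{i\in I}X_i$ (product topology).
   Context: For $n\geq1$, $\mathbb{H}^n=\{(r_0,\dots,r_n)\in\mathbb{R}^{n+1} : (r_0-1/k)^2+\sum_{i=1}^n r_i^2=(1/k)^2 \text{ for some } k\in\mathbb{N}\}$ is the $n$-dimensional Hawaiian earring with base point $\theta$ (the origin); $S^n_k$ is its sphere of radius $1/k$. $\mathbb{H}^\infty$ is the weak join of $\{(\mathbb{H}^n,\theta)\}_{n\in\mathbb{N}}$: the disjoint union with all base points identified to $\theta$, where $U$ is open iff $U\cap\mathbb{H}^n$ is open in $\mathbb{H}^n$ for all $n$ and, if $\theta\in U$, then $\mathbb{H}^n\subseteq U$ for all but finitely many $n$. $\mathcal{H}_\infty(X,x_0)$ is the set of pointed homotopy classes (rel $\{\theta\}$) of continuous maps $(\mathbb{H}^\infty,\theta)\to(X,x_0)$, with group operation $[f][g]=[f\ast g]$ where on each sphere $S^n_k\subseteq\mathbb{H}^n$, $(f\ast g)|_{S^n_k}$ is the usual $\pi_n$-concatenation of $f|_{S^n_k}$ and $g|_{S^n_k}$. *)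

(* Defs.v *)
From HB Require Import structures.
From mathcomp Require Import all_boot all_order all_algebra.
From mathcomp Require Import all_classical all_reals all_analysis.
From mathcomp Require Import Rstruct Rstruct_topology.
Set Implicit Arguments. Unset Strict Implicit. Unset Printing Implicit Defensive.
Import Order.TTheory GRing.Theory Num.Theory.
Local Open Scope classical_set_scope.
Local Open Scope ring_scope.

Section HawaiianEarrings.
Variable R : realType.

(* Index shift: for n : nat, [amb n] = R^(n+2) is the ambient space of the
   paper's H^(n+1) (paper dimensions m >= 1 correspond to n = m - 1).
   Coordinate ord0 is the paper's r_0. *)
Definition amb (n : nat) := 'I_n.+2 -> R.

Definition onSphere n (k : nat) (x : amb n) : Prop :=
  (x ord0 - k%:R^-1) ^+ 2 + \sum_(i < n.+2 | i != ord0) (x i) ^+ 2 = (k%:R^-1) ^+ 2.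
Definition inH n (x : amb n) : Prop := exists2 k : nat, (0 < k)%N & onSphere k x.

Definition origin n : amb n := fun=> 0.

Definition dist2 n (x y : amb n) : R := \sum_i (x i - y i) ^+ 2.

(* Points of H^infty other than the base point: a dimension index together
   with a non-origin point of that Hawaiian earring (disjoint union). *)
Definition Hpts := {p : {n : nat & amb n} | inH (projT2 p) /\ projT2 p <> @origin (projT1 p)}.

(* H^infty: the disjoint union with all base points identified to theta = None *)
Definition Hinf := option Hpts.
HB.instance Definition _ := gen_eqMixin Hinf.
HB.instance Definition _ := gen_choiceMixin Hinf.

Definition theta : Hinf := None.

Definition emb n (x : amb n) : Hinf :=
  match pselect (inH x /\ x <> @origin n) with
  | left h => Some (exist _ (existT _ n x) h)
  | right _ => None
  end.

(* Weak join topology: U is open iff each U /\ H^(n+1) is open in H^(n+1)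
   (Euclidean subspace topology), and if theta in U then U contains all but
   finitely many H^(n+1). *)
Definition Hopen (U : set Hinf) : Prop :=
  (forall n (x : amb n), inH x -> U (emb x) ->
     exists2 e : R, 0 < e & forall y : amb n, inH y -> dist2 x y < e -> U (emb y))
  /\ (U theta -> exists N : nat, forall n, (N <= n)%N ->
        forall x : amb n, inH x -> U (emb x)).

Lemma Hopen_setT : Hopen setT.
Proof. by split=> [n x _ _|_]; [exists 1 | exists 0%N]. Qed.

Lemma Hopen_setI : setI_closed Hopen.
Proof.
move=> U V [U1 U2] [V1 V2]; split.
  move=> n x hx [Ux Vx].
  have [e1 e10 He1] := U1 _ _ hx Ux; have [e2 e20 He2] := V1 _ _ hx Vx.
  exists (Num.min e1 e2); first by rewrite lt_min e10 e20.
  by move=> y hy; rewrite lt_min => /andP[h1 h2]; split; [exact: He1|exact: He2].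
move=> [Ut Vt]; have [N1 HN1] := U2 Ut; have [N2 HN2] := V2 Vt.
exists (maxn N1 N2) => n; rewrite geq_max => /andP[h1 h2] x hx.
by split; [exact: HN1|exact: HN2].
Qed.

Lemma Hopen_bigU (J : Type) (f : J -> set Hinf) :
  (forall j, Hopen (f j)) -> Hopen (\bigcup_j f j).
Proof.
move=> Hf; split.
  move=> n x hx [j _ fjx]; have [e e0 He] := (Hf j).1 _ _ hx fjx.
  by exists e => // y hy hxy; exists j => //; exact: He.
move=> [j _ fjt]; have [N HN] := (Hf j).2 fjt.
by exists N => n hn y hy; exists j => //; exact: HN.
Qed.

HB.instance Definition _ :=
  isOpenTopological.Build Hinf Hopen_setT Hopen_setI Hopen_bigU.

(* Parametrization of the sphere S_k of H^(n+1) by the cube I^(n+1), sending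
   the boundary of the cube to theta and identifying I^(n+1)/boundary with
   S_k:  u = 2t - 1 in [-1,1]^(n+1),  s = sup-norm of u,  v = u/|u|_2,
   point = (1/k) * (1 + cos(pi s), sin(pi s) v). *)
Definition unitI n (t : 'I_n.+1 -> R) : Prop := forall i, 0 <= t i <= 1.

Definition sph n (k : nat) (t : 'I_n.+1 -> R) : amb n :=
  let u := fun i => 2 * t i - 1 in
  let s := \big[Num.max/0]_i `|u i| in
  let r := Num.sqrt (\sum_i u i ^+ 2) in
  fun j => if unlift ord0 j is Some j'
           then sin (pi * s) * (u j' / r) / k%:R
           else (1 + cos (pi * s)) / k%:R.

Definition upd0 n (t : 'I_n.+1 -> R) (a : R) : 'I_n.+1 -> R :=
  fun i => if i == ord0 then a else t i.

(* h = f * g : on every sphere S_k^(n+1), h is the usual pi_(n+1)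
   concatenation (along the first cube coordinate) of f and g. *)
Definition concat (X : topologicalType) (f g h : Hinf -> X) : Prop :=
  forall n (k : nat) (t : 'I_n.+1 -> R), (0 < k)%N -> unitI t ->
    h (emb (sph k t)) =
      if t ord0 <= 2^-1 then f (emb (sph k (upd0 t (2 * t ord0))))
      else g (emb (sph k (upd0 t (2 * t ord0 - 1)))).

Definition based (X : topologicalType) (x0 : X) (f : Hinf -> X) : Prop :=
  continuous f /\ f theta = x0.

Definition homotopic (X : topologicalType) (x0 : X) (f g : Hinf -> X) : Prop :=
  exists H : Hinf * R -> X,
    [/\ {within [set p | 0 <= p.2 <= 1], continuous H},
        forall p, H (p, 0) = f p,
        forall p, H (p, 1) = g p &
        forall s, 0 <= s <= 1 -> H (theta, s) = x0].

End HawaiianEarrings.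

(* Main.v *)
Require Import Defs.
From HB Require Import structures.
From mathcomp Require Import all_boot all_order all_algebra.
From mathcomp Require Import all_classical all_reals all_analysis.
From mathcomp Require Import Rstruct Rstruct_topology.
From mathcomp Require Import ring lra.
Set Implicit Arguments. Unset Strict Implicit. Unset Printing Implicit Defensive.
Import Order.TTheory GRing.Theory Num.Theory.
Import numFieldNormedType.Exports.
Local Open Scope classical_set_scope.
Local Open Scope ring_scope.

Section Toolkit.
Context {R : realType} {T : Type} (F : set_system T) {FF : Filter F}.

Lemma cvg_bnd0 (a b : T -> R) : a @ F --> 0 -> (forall t, `|b t| <= 1) ->
  (fun t => a t * b t) @ F --> 0.
Proof.
move=> ha hb; apply/cvgrPdist_lt => e e0.
move/cvgrPdist_lt: ha => /(_ e e0); apply: filterS => t.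
rewrite !sub0r !normrN normrM => h.
apply: le_lt_trans h; apply: ler_piMr => //.
Qed.

Lemma cvg_sumR (I : Type) (r : seq I) (G : I -> T -> R) (g : I -> R) :
  (forall i, G i @ F --> g i) ->
  (fun t => \sum_(i <- r) G i t) @ F --> \sum_(i <- r) g i.
Proof.
move=> hG; elim: r => [|i r IH].
  rewrite big_nil; under eq_fun do rewrite big_nil; exact: cvg_cst.
rewrite big_cons; under eq_fun do rewrite big_cons.
exact: cvgD.
Qed.

Lemma maxE' (a b : R) : Num.max a b = (a + b + `|a - b|) / 2.
Proof.
have [hab|hab] := leP a b.
  by rewrite ler0_norm ?subr_le0 //; field.
by rewrite gtr0_norm ?subr_gt0 //; by field.
Qed.

Lemma cvg_maxR (a b : T -> R) (a0 b0 : R) : a @ F --> a0 -> b @ F --> b0 ->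
  (fun t => Num.max (a t) (b t)) @ F --> Num.max a0 b0.
Proof.
move=> ha hb; rewrite maxE'; under eq_fun do rewrite maxE'.
apply: cvgMl; apply: cvgD; first exact: cvgD.
by apply: cvg_norm; apply: cvgB.
Qed.

Lemma cvg_bigmaxR (I : Type) (r : seq I) (G : I -> T -> R) (g : I -> R) :
  (forall i, G i @ F --> g i) ->
  (fun t => \big[Num.max/0]_(i <- r) G i t) @ F --> \big[Num.max/0]_(i <- r) g i.
Proof.
move=> hG; elim: r => [|i r IH].
  rewrite big_nil; under eq_fun do rewrite big_nil; exact: cvg_cst.
rewrite big_cons; under eq_fun do rewrite big_cons.
exact: cvg_maxR.
Qed.

End Toolkit.

Section Sph.
Context {R : realType}.

Definition smax n (t : 'I_n.+1 -> R) := \big[Num.max/0]_i `|2 * t i - 1|.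
Definition rr n (t : 'I_n.+1 -> R) := Num.sqrt (\sum_i (2 * t i - 1) ^+ 2).

Lemma sph0 n k (t : 'I_n.+1 -> R) : sph k t ord0 = (1 + cos (pi * smax t)) / k%:R.
Proof. by rewrite /sph /= unlift_none. Qed.

Lemma sphS n k (t : 'I_n.+1 -> R) j :
  sph k t (lift ord0 j) = sin (pi * smax t) * ((2 * t j - 1) / rr t) / k%:R.
Proof. by rewrite /sph /= liftK. Qed.

Lemma sum_split n (G : 'I_n.+2 -> R) :
  \sum_i G i = G ord0 + \sum_(j < n.+1) G (lift ord0 j).
Proof. exact: big_ord_recl. Qed.

Lemma sum_split' n (G : 'I_n.+2 -> R) :
  \sum_(i < n.+2 | i != ord0) G i = \sum_(j < n.+1) G (lift ord0 j).
Proof.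
by rewrite big_mkcond big_ord_recl eqxx /= add0r.
Qed.

Lemma smax_ge0 n (t : 'I_n.+1 -> R) : 0 <= smax t.
Proof. by apply: (big_ind (fun v => 0 <= v)) => // a b ha hb; rewrite le_max ha. Qed.

Lemma sum0_smax n (t : 'I_n.+1 -> R) : \sum_i (2 * t i - 1) ^+ 2 = 0 ->
  (forall i, 2 * t i - 1 = 0) /\ smax t = 0.
Proof.
move=> /eqP; rewrite psumr_eq0 => [/allP h|i _]; last exact: sqr_ge0.
have hi : forall i, 2 * t i - 1 = 0.
  by move=> i; have /implyP := h i (mem_index_enum i) => /(_ isT); rewrite sqrf_eq0 => /eqP.
split => //; apply/eqP; rewrite eq_le smax_ge0 andbT.
by apply: bigmax_le => // i _; rewrite hi normr0.
Qed.

Lemma sin_rest n (t : 'I_n.+1 -> R) :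
  \sum_j (sin (pi * smax t) * ((2 * t j - 1) / rr t)) ^+ 2 = sin (pi * smax t) ^+ 2.
Proof.
have [S0|S0] := eqVneq (\sum_i (2 * t i - 1) ^+ 2) 0.
  have [hu hs] := sum0_smax S0.
  rewrite hs mulr0 sin0 expr0n /= big1 // => j _.
  by rewrite mul0r expr0n.
have Sge : 0 <= \sum_i (2 * t i - 1) ^+ 2 by apply: sumr_ge0 => i _; exact: sqr_ge0.
under eq_bigr do rewrite exprMn expr_div_n.
by rewrite -mulr_sumr -mulr_suml /rr sqr_sqrtr // divff // mulr1.
Qed.

Lemma natk_neq0 (k : nat) : (0 < k)%N -> (k%:R : R) != 0.
Proof. by move=> k0; rewrite pnatr_eq0 -lt0n. Qed.

Lemma sph_onSphere n k (t : 'I_n.+1 -> R) : (0 < k)%N -> onSphere k (sph k t).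
Proof.
move=> k0; have kn := natk_neq0 k0.
rewrite /onSphere sum_split' sph0.
under eq_bigr do rewrite sphS exprMn.
rewrite -mulr_suml sin_rest.
have := cos2Dsin2 (pi * smax t).
set c := cos _; set s := sin _ => h.
have -> : s ^+ 2 = 1 - c ^+ 2 by rewrite -h; ring.
by field.
Qed.

Lemma sph_norm n k (t : 'I_n.+1 -> R) : (0 < k)%N ->
  dist2 (@origin R n) (sph k t) = 2 * (1 + cos (pi * smax t)) / k%:R ^+ 2.
Proof.
move=> k0; have kn := natk_neq0 k0.
rewrite /dist2 sum_split /origin sub0r sqrrN sph0.
under eq_bigr do rewrite sub0r sqrrN sphS exprMn.
rewrite -mulr_suml sin_rest.
have := cos2Dsin2 (pi * smax t).
set c := cos _; set s := sin _ => h.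
have -> : s ^+ 2 = 1 - c ^+ 2 by rewrite -h; ring.
by field.
Qed.

Lemma sph_inH n k (t : 'I_n.+1 -> R) : (0 < k)%N -> inH (sph k t).
Proof. by move=> k0; exists k => //; exact: sph_onSphere. Qed.


Lemma pis_itv (s : R) : 0 <= s <= 1 -> pi * s \in `[0, pi].
Proof.
move=> /andP[s0 s1]; rewrite in_itv /=; apply/andP; split.
  by rewrite mulr_ge0 // pi_ge0.
by rewrite ler_piMr // pi_ge0.
Qed.

Lemma cos_le_mono (x y : R) : x \in `[0, pi] -> y \in `[0, pi] -> x <= y -> cos y <= cos x.
Proof.
move=> hx hy xy; rewrite leNgt (ltr_cos hy hx) -leNgt //.
Qed.

Lemma cos_est (s s' : R) : 0 <= s <= 1 -> 0 <= s' <= 1 -> 2 * s - 1 <= s' ->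
  1 + cos (pi * s') <= 4 * (1 + cos (pi * s)).
Proof.
move=> hs hs' hss.
have c1 := cos_le1 (pi * s'); have cN1 := cos_geN1 (pi * s).
have [sh|sh] := leP s (2^-1).
  have : 0 <= cos (pi * s).
    apply: cos_ge0_pihalf; case/andP: hs => s0 s1; apply/andP; split.
      apply: le_trans (_ : 0 <= _); first by rewrite oppr_le0 divr_ge0 ?pi_ge0.
      by rewrite mulr_ge0 ?pi_ge0.
    by rewrite ler_pM2l ?pi_gt0 // (le_trans sh) // invf_le1 // ler1n.
  move=> c0; lra.
have h2 : 0 <= 2 * s - 1 <= 1.
  case/andP: hs => s0 s1; apply/andP; split; lra.
have hp : pi * (2 * s - 1) <= pi * s' by rewrite ler_pM2l // pi_gt0.
have := cos_le_mono (pis_itv h2) (pis_itv hs') hp.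
have -> : pi * (2 * s - 1) = (pi * s) *+ 2 - pi by rewrite mulrBr mulr1 mulrCA mulr_natl.
rewrite cosB cospi sinpi mulr0 addr0 cos_mulr2n mulrN1.
set c := cos (pi * s) => h.
have : 1 + cos (pi * s') <= 2 * (1 - c) * (1 + c) by rewrite -mulr_natl in h; lra.
move=> h'; apply: le_trans h' _.
have : 0 <= 1 + c by rewrite /c; lra.
move=> hc; nra.
Qed.


Lemma smax_le1 n (t : 'I_n.+1 -> R) : unitI t -> smax t <= 1.
Proof.
move=> ut; apply: bigmax_le => // i _.
have := ut i; case/andP => h0 h1; rewrite ler_norml; apply/andP; split; lra.
Qed.

Lemma le_smax n (t : 'I_n.+1 -> R) i : `|2 * t i - 1| <= smax t.
Proof. exact: (le_bigmax 0 (fun i => `|2 * t i - 1|) i). Qed.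

Lemma unitI_upd0 n (t : 'I_n.+1 -> R) a : unitI t -> 0 <= a <= 1 -> unitI (upd0 t a).
Proof. by move=> ut ha i; rewrite /upd0; case: ifP. Qed.

Lemma smax_est n (t : 'I_n.+1 -> R) (a : R) : unitI t ->
  2 * `|2 * t ord0 - 1| - 1 <= `|2 * a - 1| -> 2 * smax t - 1 <= smax (upd0 t a).
Proof.
move=> ut ha.
suff : smax t <= (smax (upd0 t a) + 1) / 2 by lra.
apply: bigmax_le => [|i _].
  by apply: divr_ge0 => //; have := smax_ge0 (upd0 t a); lra.
have := le_smax (upd0 t a) i; rewrite /upd0.
have [->|ni] := eqVneq i ord0; first by move=> h; lra.
move=> h; have := ut i; case/andP => h0 h1.
have : `|2 * t i - 1| <= 1 by rewrite ler_norml; apply/andP; split; lra.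
lra.
Qed.

Lemma est_origin n k (t : 'I_n.+1 -> R) a : (0 < k)%N -> unitI t -> 0 <= a <= 1 ->
  2 * `|2 * t ord0 - 1| - 1 <= `|2 * a - 1| ->
  dist2 (@origin R n) (sph k (upd0 t a)) <= 4 * dist2 (@origin R n) (sph k t).
Proof.
move=> k0 ut ha hest; rewrite !sph_norm //.
have ut' := unitI_upd0 ut ha.
have := cos_est (s := smax t) (s' := smax (upd0 t a)).
rewrite smax_ge0 smax_le1 // smax_ge0 smax_le1 // => /(_ isT isT (smax_est ut hest)) h.
have kp : 0 < (k%:R : R) ^+ 2 by rewrite exprn_gt0 // ltr0n.
rewrite mulrA (mulrC 4) -mulrA -!mulrA ler_pM2l // !mulrA ler_pM2r ?invr_gt0 //.
lra.
Qed.

Lemma est_f (t0 : R) : 0 <= t0 <= 2^-1 ->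
  2 * `|2 * t0 - 1| - 1 <= `|2 * (2 * t0) - 1|.
Proof.
move=> /andP[h0 h1]; rewrite (ler0_norm (x := 2 * t0 - 1)); last by lra.
rewrite -normrN; apply: (le_trans _ (ler_norm _)); lra.
Qed.

Lemma est_g (t0 : R) : 2^-1 < t0 <= 1 ->
  2 * `|2 * t0 - 1| - 1 <= `|2 * (2 * t0 - 1) - 1|.
Proof.
move=> /andP[h0 h1]; rewrite (ger0_norm (x := 2 * t0 - 1)); last by lra.
apply: (le_trans _ (ler_norm _)); lra.
Qed.

End Sph.

Section Inv.
Context {R : realType}.

Definition clamp (z : R) := Num.min 1 (Num.max (-1) z).
Definition ymax n (y : amb R n) := \big[Num.max/0]_j `|y (lift ord0 j)|.
Definition rho' n (y : amb R n) := \sum_j y (lift ord0 j) ^+ 2.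
Definition zz n (k : nat) (y : amb R n) := k%:R * y ord0 - 1.
Definition aa n (k : nat) (y : amb R n) := acos (clamp (zz k y)) / pi.
Definition tinv n (k : nat) (y : amb R n) : 'I_n.+1 -> R :=
  fun j => (1 + aa k y * (y (lift ord0 j) / ymax y)) / 2.

Lemma clampE (z : R) : -1 <= z <= 1 -> clamp z = z.
Proof.
move=> /andP[h1 h2]; rewrite /clamp.
by rewrite max_r // min_r.
Qed.

Lemma rho'_ge0 n (y : amb R n) : 0 <= rho' y.
Proof. by apply: sumr_ge0 => i _; exact: sqr_ge0. Qed.

Lemma ymax_ge0 n (y : amb R n) : 0 <= ymax y.
Proof. by apply: (big_ind (fun v => 0 <= v)) => // a b ha hb; rewrite le_max ha. Qed.

Lemma le_ymax n (y : amb R n) j : `|y (lift ord0 j)| <= ymax y.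
Proof. exact: (le_bigmax 0 (fun j => `|y (lift ord0 j)|) j). Qed.

Lemma ydiv_le1 n (y : amb R n) j : `|y (lift ord0 j) / ymax y| <= 1.
Proof.
have [m0|m0] := eqVneq (ymax y) 0; first by rewrite m0 invr0 mulr0 normr0.
have mp : 0 < ymax y by rewrite lt_def m0 ymax_ge0.
rewrite normrM (ger0_norm (x := (ymax y)^-1)) ?invr_ge0 ?ymax_ge0 //.
by rewrite ler_pdivrMr // mul1r le_ymax.
Qed.

Lemma sphere_eq n k (y : amb R n) : (0 < k)%N -> onSphere k y ->
  zz k y ^+ 2 + k%:R ^+ 2 * rho' y = 1.
Proof.
move=> k0; have kn := natk_neq0 (R := R) k0.
rewrite /onSphere sum_split' /zz /rho' => h.
have -> : (k%:R * y ord0 - 1) ^+ 2 = k%:R ^+ 2 * (y ord0 - k%:R^-1) ^+ 2 by field.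
by rewrite -mulrDr h; field.
Qed.

Lemma zz_itv n k (y : amb R n) : (0 < k)%N -> onSphere k y -> -1 <= zz k y <= 1.
Proof.
move=> k0 hs; have := sphere_eq k0 hs; have := rho'_ge0 y.
have : 0 <= (k%:R : R) ^+ 2 by exact: sqr_ge0.
set z := zz k y => h1 h2 h3.
have : z ^+ 2 <= 1 by nra.
move=> h; apply/andP; split; nra.
Qed.

Lemma aa_itv n k (y : amb R n) : (0 < k)%N -> onSphere k y -> 0 <= aa k y <= 1.
Proof.
move=> k0 hs; have hz := zz_itv k0 hs; rewrite /aa clampE //.
apply/andP; split; first by rewrite divr_ge0 ?acos_ge0 ?pi_ge0.
by rewrite ler_pdivrMr ?pi_gt0 // mul1r acos_lepi.
Qed.

Lemma tinv_u n k (y : amb R n) j : 2 * tinv k y j - 1 = aa k y * (y (lift ord0 j) / ymax y).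
Proof. rewrite /tinv; set X := aa k y * _; by field. Qed.

Lemma unitI_tinv n k (y : amb R n) : (0 < k)%N -> onSphere k y -> unitI (tinv k y).
Proof.
move=> k0 hs j; have /andP[a0 a1] := aa_itv k0 hs.
have h := ydiv_le1 y j.
have : `|aa k y * (y (lift ord0 j) / ymax y)| <= 1.
  by rewrite normrM ger0_norm // -(mul1r 1) ler_pM.
rewrite -tinv_u ler_norml => /andP[h1 h2]; apply/andP; split; lra.
Qed.


Lemma bigmax_scale (I : Type) (r : seq I) (c : R) (G : I -> R) : 0 <= c ->
  \big[Num.max/0]_(i <- r) (c * G i) = c * \big[Num.max/0]_(i <- r) G i.
Proof.
move=> c0; elim: r => [|i r IH]; first by rewrite !big_nil mulr0.
by rewrite !big_cons IH maxr_pMr.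
Qed.

Lemma pi_neq0' : (pi : R) != 0.
Proof. by rewrite gt_eqF // pi_gt0. Qed.

Lemma piK (a : R) : pi * (a / pi) = a.
Proof. by rewrite mulrC divfK // pi_neq0'. Qed.

Lemma rest0 n (y : amb R n) : ymax y = 0 -> forall j, y (lift ord0 j) = 0.
Proof.
move=> m0 j; have := le_ymax y j; rewrite m0 => h.
by apply/eqP; rewrite -normr_eq0 eq_le h normr_ge0.
Qed.

Lemma rho'0 n (y : amb R n) : rho' y = 0 -> ymax y = 0.
Proof.
move=> r0; have h : forall j, y (lift ord0 j) = 0.
  move=> j; move/eqP: r0; rewrite /rho' psumr_eq0 => [/allP h|i _]; last exact: sqr_ge0.
  by have /implyP := h j (mem_index_enum j) => /(_ isT); rewrite sqrf_eq0 => /eqP.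
apply/eqP; rewrite eq_le ymax_ge0 andbT; apply: bigmax_le => // j _.
by rewrite h normr0.
Qed.

Lemma y_eq_origin n (y : amb R n) : y ord0 = 0 -> ymax y = 0 -> y = @origin R n.
Proof.
move=> y0 m0; apply: funext => i; rewrite /origin.
by case: (unliftP ord0 i) => [j|] ->; [exact: rest0|].
Qed.

Lemma zz1 n k (y : amb R n) : (0 < k)%N -> onSphere k y -> y <> @origin R n ->
  ymax y = 0 -> zz k y = 1.
Proof.
move=> k0 hs hy m0; have := sphere_eq k0 hs.
have -> : rho' y = 0 by rewrite /rho' big1 // => j _; rewrite rest0 // expr0n.
rewrite mulr0 addr0 => /eqP; rewrite sqrf_eq1 => /orP[/eqP//|/eqP h].
exfalso; apply: hy; apply: y_eq_origin => //.
move: h; rewrite /zz => h.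
have : (k%:R : R) * y ord0 = 0 by lra.
by move/eqP; rewrite mulf_eq0 (negPf (natk_neq0 (R:=R) k0)) /= => /eqP.
Qed.

Lemma aa_m0 n k (y : amb R n) : (0 < k)%N -> onSphere k y -> y <> @origin R n ->
  ymax y = 0 -> aa k y = 0.
Proof.
move=> k0 hs hy m0; rewrite /aa zz1 // clampE; last by apply/andP; split => //; lra.
by rewrite acos1 mul0r.
Qed.

Lemma smax_tinv n k (y : amb R n) : (0 < k)%N -> onSphere k y -> y <> @origin R n ->
  smax (tinv k y) = aa k y.
Proof.
move=> k0 hs hy; rewrite /smax.
under eq_bigr do rewrite tinv_u.
have /andP[a0 a1] := aa_itv k0 hs.
have [m0|m0] := eqVneq (ymax y) 0.
  rewrite aa_m0 //; apply/eqP; rewrite eq_le; apply/andP; split.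
    by apply: bigmax_le => // j _; rewrite m0 invr0 !mulr0 normr0.
  by apply: (big_ind (fun v => 0 <= v)) => // a b ha hb; rewrite le_max ha.
have mp : 0 < ymax y by rewrite lt_def m0 ymax_ge0.
under eq_bigr do rewrite normrM (ger0_norm a0) normrM (ger0_norm (x := (ymax y)^-1)) ?invr_ge0 ?ymax_ge0 // mulrCA mulrA.
have -> : \big[Num.max/0]_i (`|y (lift ord0 i)| * aa k y / ymax y) =
    \big[Num.max/0]_i (aa k y / ymax y * `|y (lift ord0 i)|).
  by apply: eq_bigr => j _; ring.
rewrite bigmax_scale; last by rewrite mulr_ge0 // invr_ge0 ymax_ge0.
by rewrite -/(ymax y) -mulrA mulVf // mulr1.
Qed.


Lemma sph_tinv n k (y : amb R n) : (0 < k)%N -> onSphere k y -> y <> @origin R n ->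
  sph k (tinv k y) = y.
Proof.
move=> k0 hs hy; have kn := natk_neq0 (R := R) k0.
have hz := zz_itv k0 hs.
have aaE : pi * aa k y = acos (zz k y) by rewrite /aa clampE // piK.
apply: funext => i; case: (unliftP ord0 i) => [j|] ->; last first.
  have zin : zz k y \in `[-1, 1] by rewrite in_itv /=.
  rewrite sph0 smax_tinv // aaE acosK //.
  by rewrite /zz; field.
rewrite sphS smax_tinv // aaE.
have [m0|m0] := eqVneq (ymax y) 0.
  by rewrite zz1 // acos1 sin0 !mul0r rest0.
have mp : 0 < ymax y by rewrite lt_def m0 ymax_ge0.
have r0 : rho' y != 0 by apply: contra m0 => /eqP /rho'0 ->.
have rp : 0 < rho' y by rewrite lt_def r0 rho'_ge0.
have hse := sphere_eq k0 hs.
have z1 : zz k y < 1.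
  have : 0 < (k%:R : R) ^+ 2 * rho' y by rewrite mulr_gt0 // exprn_gt0 // ltr0n.
  move=> h; have : zz k y ^+ 2 < 1 by lra.
  by move=> h2; case/andP: hz => _ h3; nra.
have ap : 0 < aa k y.
  rewrite /aa clampE // divr_gt0 ?pi_gt0 // acos_gt0 //.
  by case/andP: hz => -> _.
rewrite sin_acos // (_ : 1 - zz k y ^+ 2 = k%:R ^+ 2 * rho' y); last by lra.
rewrite sqrtrM ?sqr_ge0 // sqrtr_sqr (ger0_norm (ler0n _ _)).
have rrE : rr (tinv k y) = aa k y / ymax y * Num.sqrt (rho' y).
  rewrite /rr (eq_bigr (fun j => (aa k y / ymax y * y (lift ord0 j)) ^+ 2)); last first.
    by move=> j' _; rewrite tinv_u mulrA mulrAC.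
  under eq_bigr do rewrite exprMn.
  rewrite -mulr_sumr sqrtrM ?sqr_ge0 // sqrtr_sqr ger0_norm //.
  by rewrite divr_ge0 ?ymax_ge0 // ltW.
rewrite rrE tinv_u.
have sq : Num.sqrt (rho' y) != 0 by rewrite gt_eqF // sqrtr_gt0.
have an : aa k y != 0 by rewrite gt_eqF.
field.
by rewrite sq m0 an kn.
Qed.

End Inv.

Section Surj.
Context {R : realType}.

Lemma smax_zero n : smax (fun _ : 'I_n.+1 => 0 : R) = 1.
Proof.
apply/eqP; rewrite eq_le; apply/andP; split.
  by apply: bigmax_le => // i _; rewrite mulr0 sub0r normrN normr1.
by have := le_smax (fun _ : 'I_n.+1 => 0 : R) ord0; rewrite mulr0 sub0r normrN normr1.
Qed.

Lemma sph_zero n k : (0 < k)%N -> sph k (fun _ : 'I_n.+1 => 0 : R) = @origin R n.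
Proof.
move=> k0; apply: funext => i; rewrite /origin.
case: (unliftP ord0 i) => [j|] ->.
  by rewrite sphS smax_zero mulr1 sinpi !mul0r.
by rewrite sph0 smax_zero mulr1 cospi subrr mul0r.
Qed.

Lemma emb_origin n : emb (@origin R n) = theta R.
Proof. rewrite /emb; destruct (pselect _) as [a|] => //; exfalso; by case: a. Qed.

Lemma Hsurj (p : Hinf R) : exists n (kk : nat) (t : 'I_n.+1 -> R),
  [/\ (0 < kk)%N, unitI t & p = emb (sph kk t)].
Proof.
case: p => [[[n y] [hin hne]]|]; last first.
  exists 0%N, 1%N, (fun _ => 0); split => //.
    by move=> i; rewrite lexx ler01.
  by rewrite sph_zero // emb_origin.
have [kk k0 hs] := hin.
exists n, kk, (tinv kk y); split => //; first exact: unitI_tinv.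
rewrite sph_tinv //= /emb; case: pselect => [h|[]]; last by split.
by rewrite (Prop_irrelevance h (conj hin hne)).
Qed.

End Surj.

Section Cont.
Context {R : realType} {T : Type} (F : set_system T) {FF : Filter F}.

Definition ccvg m (W : T -> 'I_m -> R) (w : 'I_m -> R) :=
  forall j, (fun t => W t j) @ F --> w j.

Lemma cvg_smax n (W : T -> 'I_n.+1 -> R) w : ccvg W w ->
  (fun t => smax (W t)) @ F --> smax w.
Proof.
move=> hW; apply: cvg_bigmaxR => i.
apply: cvg_norm; apply: cvgB; last exact: cvg_cst.
exact: cvgMr.
Qed.

Lemma cvg_rr n (W : T -> 'I_n.+1 -> R) w : ccvg W w ->
  (fun t => rr (W t)) @ F --> rr w.
Proof.
move=> hW; apply: (continuous_cvg _ (@sqrt_continuous R _)).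
apply: cvg_sumR => i; rewrite expr2; under eq_fun do rewrite expr2.
by apply: cvgM; apply: cvgB; [exact: cvgMr| exact: cvg_cst|exact: cvgMr| exact: cvg_cst].
Qed.

Lemma u_rr_le1 n (t : 'I_n.+1 -> R) j : `|(2 * t j - 1) / rr t| <= 1.
Proof.
have [r0|r0] := eqVneq (rr t) 0; first by rewrite r0 invr0 mulr0 normr0.
have rp : 0 < rr t by rewrite lt_def r0 sqrtr_ge0.
rewrite normrM (ger0_norm (x := (rr t)^-1)) ?invr_ge0 ?sqrtr_ge0 //.
rewrite ler_pdivrMr // mul1r -sqrtr_sqr /rr ler_sqrt; last first.
  by apply: sumr_ge0 => i _; exact: sqr_ge0.
rewrite (bigD1 j) //= lerDl; apply: sumr_ge0 => i _; exact: sqr_ge0.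
Qed.

Lemma cvg_sph0 n k (W : T -> 'I_n.+1 -> R) w : ccvg W w ->
  (fun t => sph k (W t) ord0) @ F --> sph k w ord0.
Proof.
move=> hW; rewrite sph0; under eq_fun do rewrite sph0.
apply: cvgMl; apply: cvgD; first exact: cvg_cst.
apply: (continuous_cvg _ (@continuous_cos R _)).
apply: cvgMr; exact: cvg_smax.
Qed.

Lemma cvg_sphS n k (W : T -> 'I_n.+1 -> R) w j : ccvg W w ->
  (fun t => sph k (W t) (lift ord0 j)) @ F --> sph k w (lift ord0 j).
Proof.
move=> hW; rewrite sphS; under eq_fun do rewrite sphS.
apply: cvgMl.
have hs : (fun t => sin (pi * smax (W t))) @ F --> sin (pi * smax w).
  apply: (continuous_cvg _ (@continuous_sin R _)).
  apply: cvgMr; exact: cvg_smax.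
have [r0|r0] := eqVneq (rr w) 0.
  have S0 : \sum_i (2 * w i - 1) ^+ 2 = 0.
    apply/eqP; rewrite eq_le sumr_ge0 ?andbT => [|i _]; last exact: sqr_ge0.
    by move/eqP: r0; rewrite sqrtr_eq0.
  have [_ sm0] := sum0_smax S0.
  rewrite sm0 mulr0 sin0 mul0r.
  apply: cvg_bnd0; last by move=> t; exact: u_rr_le1.
  by move: hs; rewrite sm0 mulr0 sin0.
apply: cvgM => //; apply: cvgM.
  apply: cvgB; [exact: cvgMr|exact: cvg_cst].
exact: (cvgV r0 (cvg_rr hW)).
Qed.

Lemma cvg_sph n k (W : T -> 'I_n.+1 -> R) w : ccvg W w ->
  ccvg (fun t => sph k (W t)) (sph k w).
Proof.
move=> hW i; case: (unliftP ord0 i) => [j|] ->; [exact: cvg_sphS|exact: cvg_sph0].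
Qed.

Lemma cvg_upd0 n (W : T -> 'I_n.+1 -> R) w (a : T -> R) a0 : ccvg W w -> a @ F --> a0 ->
  ccvg (fun t => upd0 (W t) (a t)) (upd0 w a0).
Proof. by move=> hW ha j; rewrite /upd0; case: (j == ord0). Qed.

Lemma cvg_dist2 n (W : T -> amb R n) w : ccvg W w ->
  (fun t => dist2 w (W t)) @ F --> 0.
Proof.
move=> hW.
have E : \sum_i (w i - w i) ^+ 2 = 0 :> R by rewrite big1 // => i _; rewrite subrr expr0n.
rewrite -E.
apply: cvg_sumR => i; rewrite expr2; under eq_fun do rewrite expr2.
by apply: cvgM; apply: cvgB => //; exact: cvg_cst.
Qed.

Lemma cvg_sqsum m (W : T -> 'I_m -> R) w : ccvg W w ->
  (fun t => \sum_i W t i ^+ 2) @ F --> \sum_i w i ^+ 2.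
Proof.
move=> hW; apply: cvg_sumR => i; rewrite expr2; under eq_fun do rewrite expr2.
exact: cvgM.
Qed.

Lemma minE' (a b : R) : Num.min a b = (a + b - `|a - b|) / 2.
Proof.
have [hab|hab] := leP a b.
  by rewrite ler0_norm ?subr_le0 //; field.
by rewrite gtr0_norm ?subr_gt0 //; field.
Qed.

Lemma cvg_clamp (z : T -> R) (z0 : R) : z @ F --> z0 -> (fun t => clamp (z t)) @ F --> clamp z0.
Proof.
move=> hz; rewrite /clamp minE'; under eq_fun do rewrite minE'.
apply: cvgMl; apply: cvgB; first apply: cvgD; first exact: cvg_cst.
- by apply: cvg_maxR => //; exact: cvg_cst.
apply: cvg_norm; apply: cvgB; first exact: cvg_cst.
by apply: cvg_maxR => //; exact: cvg_cst.
Qed.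

Lemma cvg_acos_clamp (z : T -> R) (z0 : R) : -1 < z0 <= 1 -> z @ F --> z0 ->
  (fun t => acos (clamp (z t))) @ F --> acos z0.
Proof.
move=> /andP[zl zr] hz.
have [z1|z1] := ltP z0 1.
  have -> : z0 = clamp z0 by rewrite clampE // (ltW zl) (ltW z1).
  apply: (continuous_cvg _ (continuous_acos _)); last exact: cvg_clamp.
  by rewrite clampE ?zl ?z1 // (ltW zl) (ltW z1).
have z01 : z0 = 1 by apply/eqP; rewrite eq_le zr.
rewrite z01 in hz *.
rewrite acos1; apply/cvgrPdist_lt => e e0.
pose e' := Num.min e (pi / 2).
have e'0 : 0 < e' by rewrite lt_min e0 divr_gt0 // pi_gt0.
have e'pi2 : e' <= pi / 2 by rewrite /e' ge_min lexx orbT.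
have pi2 : pi / 2 <= pi :> R by rewrite ler_pdivrMr // ler_peMr // ?pi_ge0 // ler1n.
have e'pi : e' \in `[0, pi] by rewrite in_itv /= (ltW e'0) /= (le_trans e'pi2).
have pi0 : (0 : R) \in `[0, pi] by rewrite in_itv /= lexx pi_ge0.
have ce1 : cos e' < 1 by rewrite -cos0 (ltr_cos pi0 e'pi).
have /cvgrPdist_lt /(_ (1 - cos e')) := hz.
rewrite subr_gt0 => /(_ ce1); apply: filterS => t h.
have zt : cos e' < z t.
  by have := ler_norm (1 - z t); lra.
set c := clamp (z t).
have cl : -1 <= c <= 1.
  rewrite /c /clamp; apply/andP; split.
    rewrite le_min le_max lexx /= andbT; lra.
  by rewrite ge_min lexx.
have cgt : cos e' < c.
  rewrite /c /clamp lt_min ce1 /= lt_max zt orbT //.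
have cin : c \in `[-1, 1] by rewrite in_itv /=.
have acin : acos c \in `[0, pi] by rewrite in_itv /= acos_ge0 // acos_lepi.
have : cos e' < cos (acos c) by rewrite acosK.
rewrite (ltr_cos acin e'pi) => hlt.
rewrite sub0r normrN ger0_norm ?acos_ge0 //.
by apply: lt_le_trans hlt _; rewrite /e' ge_min lexx.
Qed.


Lemma zz_gtN1 n k (y : amb R n) : (0 < k)%N -> onSphere k y -> y <> @origin R n ->
  -1 < zz k y.
Proof.
move=> k0 hs hy; have /andP[h1 h2] := zz_itv k0 hs.
rewrite lt_neqAle h1 andbT; apply/eqP => hz.
have := sphere_eq k0 hs; rewrite -hz expr2 mulN1r opprK => h.
have r0 : rho' y = 0.
  have : (k%:R : R) ^+ 2 * rho' y = 0 by lra.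
  by move/eqP; rewrite mulf_eq0 expf_eq0 (negPf (natk_neq0 (R := R) k0)) andbF /= => /eqP.
apply: hy; apply: y_eq_origin; last exact: rho'0.
move: hz; rewrite /zz => hz.
have : (k%:R : R) * y ord0 = 0 by lra.
by move/eqP; rewrite mulf_eq0 (negPf (natk_neq0 (R:=R) k0)) /= => /eqP.
Qed.

Lemma cvg_tinv n k (Y : T -> amb R n) (y : amb R n) : (0 < k)%N -> onSphere k y ->
  y <> @origin R n -> ccvg Y y -> ccvg (fun t => tinv k (Y t)) (tinv k y).
Proof.
move=> k0 hs hy hY j.
have ha : (fun t => aa k (Y t)) @ F --> aa k y.
  rewrite {2}/aa (clampE (zz_itv k0 hs)).
  apply: cvgMl; apply: cvg_acos_clamp.
    by rewrite (zz_gtN1 k0 hs hy) /=; case/andP: (zz_itv k0 hs).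
  by apply: cvgB; [exact: cvgMr|exact: cvg_cst].
rewrite /tinv; apply: cvgMl; apply: cvgD; first exact: cvg_cst.
have [m0|m0] := eqVneq (ymax y) 0.
  rewrite aa_m0 // mul0r; apply: cvg_bnd0; last by move=> t; exact: ydiv_le1.
  by move: ha; rewrite aa_m0.
apply: cvgM => //; apply: cvgM => //.
have hm : (fun t => ymax (Y t)) @ F --> ymax y.
  by apply: cvg_bigmaxR => i; exact: cvg_norm.
exact: (cvgV m0 hm).
Qed.

End Cont.




Section Final.
Context {R : realType}.

Definition Dx n (x : amb R n) :=
  filter_from [set d : R | 0 < d] (fun d => [set y | dist2 x y < d]).

Lemma Dx_filter n (x : amb R n) : Filter (Dx x).
Proof.
apply: filter_from_filter; first by exists 1; rewrite /= ltr01.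
move=> a b /= a0 b0; exists (Num.min a b); first by rewrite /= lt_min a0 b0.
by move=> y /=; rewrite lt_min => /andP[h1 h2].
Qed.

Lemma dist2_ge0 n (x y : amb R n) : 0 <= dist2 x y.
Proof. by apply: sumr_ge0 => i _; exact: sqr_ge0. Qed.

Lemma dist2_coord n (x y : amb R n) i : (x i - y i) ^+ 2 <= dist2 x y.
Proof.
rewrite /dist2 (bigD1 i) //= lerDl; apply: sumr_ge0 => j _; exact: sqr_ge0.
Qed.

Lemma Dx_coord n (x : amb R n) : ccvg (Dx x) (fun y => y) x.
Proof.
have FF := @Dx_filter n x.
move=> j; apply/cvgrPdist_lt => e e0.
exists (e ^+ 2); first by rewrite /= exprn_gt0.
move=> y /= hy; have := dist2_coord x y j => h.
have h2 : `|x j - y j| ^+ 2 < e ^+ 2 by rewrite real_normK ?num_real; lra.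
rewrite -(ltr_pXn2r (n := 2)) // ?nnegrE ?normr_ge0 // ?ltW //.
Qed.

Definition Psif n k (y : amb R n) := sph k (upd0 (tinv k y) (2 * tinv k y ord0)).
Definition Psig n k (y : amb R n) := sph k (upd0 (tinv k y) (2 * tinv k y ord0 - 1)).

Lemma sphere_rho n k (y : amb R n) : (0 < k)%N -> onSphere k y ->
  k%:R * \sum_i y i ^+ 2 = 2 * y ord0.
Proof.
move=> k0 hs; have kn := natk_neq0 (R := R) k0.
have := sphere_eq k0 hs; rewrite sum_split -/(rho' y) /zz => h.
apply: (mulfI kn); rewrite mulrA -expr2.
have : k%:R ^+ 2 * (y ord0 ^+ 2 + rho' y) = 2 * (k%:R * y ord0) by nra.
by move=> ->; ring.
Qed.

Lemma nat_close (a b : nat) : `|(a%:R : R) - b%:R| < 1 -> a = b.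
Proof.
wlog ab : a b / (a <= b)%N.
  move=> W h; have [ab|ba] := leqP a b; first exact: W.
  by apply/esym/W; [exact: ltnW|rewrite distrC].
rewrite distrC -natrB // ger0_norm ?ler0n // ltrn1 => h.
by apply/eqP; rewrite eqn_leq ab /= -subn_eq0; move: h; case: (b - a)%N.
Qed.

Lemma LC n kx (x : amb R n) e : (0 < kx)%N -> onSphere kx x -> x <> @origin R n ->
  0 < e -> exists2 d, 0 < d & forall y, inH y -> dist2 x y < d ->
  [/\ onSphere kx y, y <> @origin R n, dist2 (Psif kx x) (Psif kx y) < e,
      dist2 (Psig kx x) (Psig kx y) < e &
      `|tinv kx x ord0 - tinv kx y ord0| < e].
Proof.
move=> k0 hs hx e0.
have FF := @Dx_filter n x.
have hY := @Dx_coord n x.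
have ht := cvg_tinv (FF := FF) k0 hs hx hY.
have h2f : (fun y => 2 * tinv kx y ord0) @ Dx x --> 2 * tinv kx x ord0.
  by apply: cvgMr; exact: ht.
have h2g : (fun y => 2 * tinv kx y ord0 - 1) @ Dx x --> 2 * tinv kx x ord0 - 1.
  by apply: cvgB; [apply: cvgMr; exact: ht|exact: cvg_cst].
have hPf := cvg_dist2 (FF := FF) (cvg_sph (FF := FF) (k := kx) (cvg_upd0 ht h2f)).
have hPg := cvg_dist2 (FF := FF) (cvg_sph (FF := FF) (k := kx) (cvg_upd0 ht h2g)).
have hrho := cvg_sqsum (FF := FF) hY.
have hphi : (fun y : amb R n => 2 * y ord0 - kx%:R * \sum_i y i ^+ 2) @ Dx x -->
            2 * x ord0 - kx%:R * \sum_i x i ^+ 2.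
  by apply: cvgB; apply: cvgMr => //; exact: hY.
rewrite -(sphere_rho k0 hs) subrr in hphi.
set rx := \sum_i x i ^+ 2 in hrho.
have rx0 : 0 < rx.
  rewrite lt_def sumr_ge0 ?andbT => [|i _]; last exact: sqr_ge0.
  apply/eqP => r0; apply: hx; apply: y_eq_origin.
    have := dist2_coord (@origin R n) x ord0.
    rewrite /dist2 /origin; under eq_bigr do rewrite sub0r sqrrN; rewrite -/rx r0.
    by rewrite sub0r sqrrN => h; apply/eqP; rewrite -sqrf_eq0 eq_le h sqr_ge0.
  apply: rho'0; apply/eqP; rewrite eq_le rho'_ge0 andbT.
  by move: r0; rewrite /rx sum_split /rho' => r0; have := sqr_ge0 (x ord0); lra.
have rx2 : 0 < rx / 2 by rewrite divr_gt0.
move/cvgrPdist_lt: hPf => /(_ e e0) hPf.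
move/cvgrPdist_lt: hPg => /(_ e e0) hPg.
move/cvgrPdist_lt: hrho => /(_ _ rx2) hrho.
move/cvgrPdist_lt: hphi => /(_ _ rx2) hphi.
move/cvgrPdist_lt: (ht ord0) => /(_ e e0) ht0.
have := filterI hPf (filterI hPg (filterI hrho (filterI hphi ht0))).
case=> d d0 hd; exists d => // y hy dy.
have [h1 [h2 [h3 [h4 h5]]]] := hd y dy.
have rpos : rx / 2 < \sum_i y i ^+ 2.
  by have := ler_norm (rx - \sum_i y i ^+ 2); lra.
have [kk kk0 hsk] := hy.
have ek : kk = kx.
  apply: nat_close.
  have := sphere_rho kk0 hsk => hk.
  move: h4; rewrite sub0r normrN.
  have -> : 2 * y ord0 - kx%:R * \sum_i y i ^+ 2 = (kk%:R - kx%:R) * \sum_i y i ^+ 2.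
    by rewrite -hk; ring.
  rewrite normrM (ger0_norm (x := \sum_i y i ^+ 2)); last by apply: sumr_ge0 => i _; exact: sqr_ge0.
  move=> h; have : `|(kk%:R : R) - kx%:R| * \sum_i y i ^+ 2 < 1 * \sum_i y i ^+ 2 by lra.
  by rewrite ltr_pM2r //; lra.
subst kk; split => //.
- move=> yo; move: rpos; rewrite yo.
  have -> : \sum_i (@origin R n) i ^+ 2 = 0 by rewrite big1 // => i _; rewrite /origin expr0n.
  by move=> h; have := lt_trans rx2 h; rewrite ltxx.
- by move: h1; rewrite sub0r normrN ger0_norm // dist2_ge0.
- by move: h2; rewrite sub0r normrN ger0_norm // dist2_ge0.
Qed.

End Final.


Section Glue.
Context {R : realType}.

Lemma sph_smax1 n k (t : 'I_n.+1 -> R) : smax t = 1 -> sph k t = @origin R n.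
Proof.
move=> s1; apply: funext => i; rewrite /origin.
case: (unliftP ord0 i) => [j|] ->.
  by rewrite sphS s1 mulr1 sinpi !mul0r.
by rewrite sph0 s1 mulr1 cospi subrr mul0r.
Qed.

Lemma smax_upd_end n (t : 'I_n.+1 -> R) a : unitI t -> (a = 0 \/ a = 1) ->
  smax (upd0 t a) = 1.
Proof.
move=> ut ha; have ua : 0 <= a <= 1 by case: ha => ->; rewrite ?lexx ?ler01.
apply/eqP; rewrite eq_le smax_le1 /=; last exact: unitI_upd0.
have := le_smax (upd0 t a) ord0; rewrite /upd0 eqxx.
have e : `|2 * a - 1| = 1 :> R.
  case: ha => ->; first by rewrite mulr0 sub0r normrN normr1.
  by rewrite mulr1 (_ : 2 - 1 = 1 :> R) ?normr1 //; lra.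
by rewrite e.
Qed.

Lemma origin_inH n : inH (@origin R n).
Proof. by rewrite -(@sph_zero R n 1%N) //; exact: sph_inH. Qed.

Lemma kbranch (Y : topologicalType) (f g k : Hinf R -> Y) n kk (y : amb R n) :
  concat f g k -> (0 < kk)%N -> onSphere kk y -> y <> @origin R n ->
  k (emb y) = if tinv kk y ord0 <= 2^-1 then f (emb (Psif kk y)) else g (emb (Psig kk y)).
Proof.
move=> ck k0 hs hy.
by rewrite -{1}(sph_tinv k0 hs hy) ck //; exact: unitI_tinv.
Qed.

End Glue.

Section LcontS.
Context {R : realType}.

Lemma Lcont (Y : topologicalType) (y0 : Y) (f g k : Hinf R -> Y) :
  based y0 f -> based y0 g -> concat f g k -> based y0 k.
Proof.
move=> [cf f0] [cg g0] ck.
have kth : k (theta R) = y0.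
  have ut0 : unitI (fun _ : 'I_1 => 0 : R) by move=> i; rewrite lexx ler01.
  have := ck 0%N 1%N (fun _ => 0) isT ut0.
  have -> : upd0 (fun _ : 'I_1 => 0 : R) (2 * 0) = (fun _ => 0).
    by apply: funext => i; rewrite /upd0 mulr0; case: ifP.
  by rewrite sph_zero // emb_origin invr_ge0 ler0n f0.
split => //.
apply/continuousP => V oV.
have hF : Hopen (f @^-1` V) := (continuousP f).1 cf V oV.
have hG : Hopen (g @^-1` V) := (continuousP g).1 cg V oV.
change (Hopen (k @^-1` V)).
have fth : V (k (theta R)) -> V (f (theta R)) by rewrite kth f0.
have gth : V (k (theta R)) -> V (g (theta R)) by rewrite kth g0.
split.
- move=> n x hx kxV.
  have [xo|xo] := pselect (x = @origin R n).
    subst x; move: kxV; rewrite /= emb_origin => kxV.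
    have fV : (f @^-1` V) (emb (@origin R n)) by rewrite /= emb_origin; exact: fth.
    have gV : (g @^-1` V) (emb (@origin R n)) by rewrite /= emb_origin; exact: gth.
    have [ef ef0 hef] := hF.1 n _ (origin_inH n) fV.
    have [eg eg0 heg] := hG.1 n _ (origin_inH n) gV.
    exists (Num.min ef eg / 4); first by rewrite divr_gt0 // lt_min ef0 eg0.
    move=> y hy dy.
    have [yo|yo] := pselect (y = @origin R n); first by rewrite /= yo emb_origin.
    have [kk k0 hs] := hy.
    rewrite /= (kbranch ck k0 hs yo).
    have ut := unitI_tinv k0 hs.
    have yE := sph_tinv k0 hs yo.
    have /andP[t0 t1] := ut ord0.
    have hmin1 : Num.min ef eg <= ef by rewrite ge_min lexx.
    have hmin2 : Num.min ef eg <= eg by rewrite ge_min lexx orbT.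
    case: ifP => ht.
      apply: hef; first exact: sph_inH.
      have ha : 0 <= 2 * tinv kk y ord0 <= 1 by apply/andP; split; lra.
      have := est_origin k0 ut ha (est_f _); rewrite yE => /(_ _) h.
      have := h; rewrite t0 ht => /(_ isT) h'.
      by rewrite /Psif; lra.
    have ht' : 2^-1 < tinv kk y ord0 by rewrite ltNge ht.
    apply: heg; first exact: sph_inH.
    have ha : 0 <= 2 * tinv kk y ord0 - 1 <= 1 by apply/andP; split; lra.
    have := est_origin k0 ut ha (est_g _); rewrite yE => /(_ _) h.
    have := h; rewrite ht' t1 => /(_ isT) h'.
    by rewrite /Psig; lra.
  have [kx kx0 hsx] := hx.
  move: kxV; rewrite /= (kbranch ck kx0 hsx xo) => kxV.
  have utx := unitI_tinv kx0 hsx.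
  have [lt|gt|eq] := ltgtP (tinv kx x ord0) (2^-1).
  + move: kxV; rewrite (ltW lt) => kxV.
    have [ef ef0 hef] := hF.1 n _ (sph_inH _ kx0) kxV.
    have e0 : 0 < Num.min ef (2^-1 - tinv kx x ord0) by rewrite lt_min ef0 subr_gt0 lt.
    have [d d0 hd] := LC kx0 hsx xo e0.
    exists d => // y hy dy; have [hsy yo h1 h2 h3] := hd y hy dy.
    rewrite /= (kbranch ck kx0 hsy yo).
    have m1 : Num.min ef (2^-1 - tinv kx x ord0) <= ef by rewrite ge_min lexx.
    have m2 : Num.min ef (2^-1 - tinv kx x ord0) <= 2^-1 - tinv kx x ord0 by rewrite ge_min lexx orbT.
    have : tinv kx y ord0 <= 2^-1.
      by have := ler_norm (tinv kx y ord0 - tinv kx x ord0); rewrite distrC; lra.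
    move=> ->; apply: hef; first exact: sph_inH.
    by move: h1; rewrite /Psif => h1; lra.
  + move: kxV; rewrite leNgt gt /= => kxV.
    have [eg eg0 heg] := hG.1 n _ (sph_inH _ kx0) kxV.
    have e0 : 0 < Num.min eg (tinv kx x ord0 - 2^-1) by rewrite lt_min eg0 subr_gt0 gt.
    have [d d0 hd] := LC kx0 hsx xo e0.
    exists d => // y hy dy; have [hsy yo h1 h2 h3] := hd y hy dy.
    rewrite /= (kbranch ck kx0 hsy yo).
    have m1 : Num.min eg (tinv kx x ord0 - 2^-1) <= eg by rewrite ge_min lexx.
    have m2 : Num.min eg (tinv kx x ord0 - 2^-1) <= tinv kx x ord0 - 2^-1 by rewrite ge_min lexx orbT.
    have : ~~ (tinv kx y ord0 <= 2^-1).
      rewrite -ltNge.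
      by have := ler_norm (tinv kx x ord0 - tinv kx y ord0); lra.
    move=> /negPf ->; apply: heg; first exact: sph_inH.
    by move: h2; rewrite /Psig => h2; lra.
  + have PfE : Psif kx x = @origin R n.
      apply: sph_smax1; apply: smax_upd_end => //; right; rewrite eq mulfV //.
    have PgE : Psig kx x = @origin R n.
      apply: sph_smax1; apply: smax_upd_end => //; left; rewrite eq mulfV // subrr //.
    move: kxV; rewrite eq lexx PfE emb_origin => fV0.
    have fV : (f @^-1` V) (emb (@origin R n)) by rewrite /= emb_origin.
    have gV : (g @^-1` V) (emb (@origin R n)) by rewrite /= emb_origin g0 -f0.
    have [ef ef0 hef] := hF.1 n _ (origin_inH n) fV.
    have [eg eg0 heg] := hG.1 n _ (origin_inH n) gV.
    have e0 : 0 < Num.min ef eg by rewrite lt_min ef0 eg0.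
    have [d d0 hd] := LC kx0 hsx xo e0.
    exists d => // y hy dy; have [hsy yo h1 h2 h3] := hd y hy dy.
    rewrite /= (kbranch ck kx0 hsy yo).
    have hmin1 : Num.min ef eg <= ef by rewrite ge_min lexx.
    have hmin2 : Num.min ef eg <= eg by rewrite ge_min lexx orbT.
    rewrite PfE in h1; rewrite PgE in h2.
    case: ifP => _.
      by apply: hef; [exact: sph_inH|lra].
    by apply: heg; [exact: sph_inH|lra].
- move=> hth.
  have [Nf hNf] := hF.2 (fth hth).
  have [Ng hNg] := hG.2 (gth hth).
  exists (maxn Nf Ng) => n; rewrite geq_max => /andP[h1 h2] y hy.
  have [yo|yo] := pselect (y = @origin R n); first by rewrite /= yo emb_origin.
  have [kk k0 hs] := hy.
  rewrite /= (kbranch ck k0 hs yo).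
  case: ifP => _; [apply: hNf|apply: hNg] => //; exact: sph_inH.
Qed.


End LcontS.

Section ProdTop.
Context (I : Type) (X : I -> topologicalType).

Lemma proj_cont (i : I) : continuous (fun f : prod_topology X => f i).
Proof. exact: (@proj_continuous {classic I} X i). Qed.

Lemma prod_cvgP (T : Type) (F : set_system T) (H : T -> prod_topology X) (f : prod_topology X) :
  Filter F -> (forall i, (fun t => H t i) @ F --> f i) -> H @ F --> f.
Proof.
move=> FF hi; apply/cvg_sup => i.
apply/(@cvg_image _ _ (fun g : prod_topology X => g i)).
- rewrite eqEsubset; split => // y _.
  exists (@dfwith {classic I} X f i y) => //.
  by rewrite /= dfwithin.
move=> B /= hB; exists ((fun g : prod_topology X => g i) @^-1` B).
  exact: (hi i B hB).
rewrite eqEsubset; split => y.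
  by case => g hg <-.
move=> By; exists (@dfwith {classic I} X f i y); last by rewrite /= dfwithin.
by rewrite /= dfwithin.
Qed.
End ProdTop.

Section Main.
Local Open Scope ring_scope.
Context {R : realType}.

Lemma based_refl (Y : topologicalType) (y0 : Y) (f : Hinf R -> Y) :
  based y0 f -> homotopic y0 f f.
Proof.
move=> [cf f0]; exists (fun q => f q.1); split => //.
apply: continuous_subspaceT => q.
apply: continuous_comp; last exact: cf.
exact: cvg_fst.
Qed.


End Main.

Unset Implicit Arguments.
Theorem theorem3p4 (I : Type) (X : I -> topologicalType) (x : forall i, X i) :
  exists Phi : (Hinf Rdefinitions.R -> prod_topology X) ->
               forall i, Hinf Rdefinitions.R -> X i,
  [/\ forall f, based (x : prod_topology X) f ->
        forall i, based (x i) (Phi f i),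
      forall f g, based (x : prod_topology X) f -> based (x : prod_topology X) g ->
        (homotopic (x : prod_topology X) f g <->
         forall i, homotopic (x i) (Phi f i) (Phi g i)),
      forall gam : forall i, Hinf Rdefinitions.R -> X i,
        (forall i, based (x i) (gam i)) ->
        exists2 f, based (x : prod_topology X) f &
          forall i, homotopic (x i) (Phi f i) (gam i) &
      forall f g h (k : forall i, Hinf Rdefinitions.R -> X i),
        based (x : prod_topology X) f -> based (x : prod_topology X) g ->
        concat f g h -> (forall i, concat (Phi f i) (Phi g i) (k i)) ->
        forall i, homotopic (x i) (Phi h i) (k i)].
Proof.
have bproj : forall (f : Hinf Rdefinitions.R -> prod_topology X) i,
    based (x : prod_topology X) f -> based (x i) (fun p => f p i).
  move=> f i [cf f0]; split; last by rewrite f0.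
  move=> p; exact: (continuous_comp (cf p) (@proj_cont I X i (f p))).
exists (fun f i p => f p i); split.
- by move=> f bf i; exact: bproj.
- move=> f g bf bg; split.
    move=> [H [cH H0 H1 Ht]] i.
    exists (fun q => H q i); split.
    + move=> q; exact: (continuous_comp (cH q) (@proj_cont I X i (H q))).
    + by move=> p; rewrite H0.
    + by move=> p; rewrite H1.
    + by move=> s hs; rewrite Ht.
  move=> hi.
  pose Hs := fun i => projT1 (cid (hi i)).
  have hHs := fun i => projT2 (cid (hi i)).
  exists (fun q i => Hs i q); split.
  + move=> q; apply: prod_cvgP => i.
    by have [c _ _ _] := hHs i; exact: c.
  + move=> p; apply: functional_extensionality_dep => i.
    by have [_ c _ _] := hHs i; rewrite /Hs c.
  + move=> p; apply: functional_extensionality_dep => i.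
    by have [_ _ c _] := hHs i; rewrite /Hs c.
  + move=> s hs; apply: functional_extensionality_dep => i.
    by have [_ _ _ c] := hHs i; rewrite /Hs c.
- move=> gam bgam; exists (fun p i => gam i p).
    split.
      move=> p; apply: prod_cvgP => [|i]; first exact: nbhs_filter.
      by have [c _] := bgam i; exact: c.
    apply: functional_extensionality_dep => i.
    by have [_ c] := bgam i.
  by move=> i; apply: based_refl.
- move=> f g h k bf bg chk ck i.
  have bk : based (x i) (k i) by apply: Lcont (ck i); apply: bproj.
  have -> : (fun p => h p i) = k i.
    apply: funext => p.
    have [n [kk [t [kk0 ut ->]]]] := Hsurj p.
    rewrite (chk _ _ _ kk0 ut) (ck i _ _ _ kk0 ut).
    by case: ifP.
  exact: based_refl.
Qed.
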